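(* Let $\mathcal{C}$ and $\mathcal{E}$ be finite sets and $T_1,\dots,T_\ell$ be $|\mathcal{C}|\times|\mathcal{E}|$ matrices. Let $\{A_0=I,A_1,\dots,A_d\}$ be the basis of $\{0,1\}$-matrices of a commutative association scheme on $\mathcal{E}$, with primitive idempotents $E_0,\dots,E_d$ and eigenvalues $p_k(r)$ defined by $A_kE_r=p_k(r)E_r$, and suppose $T_i^\top T_j=\sum_{k=0}^d t_{ij}^kA_k$ for complex numbers $t_{ij}^k$ ($i,j\in[\ell]$). For $j\in[m]$ let $F_j=\sum_{i=1}^\ell f_{ij}T_i$ with $f_{ij}\in\mathbb{C}$, fix $s\in\{0,\dots,d\}$ and let $g:[m]\to[\ell]$. Then the following are equivalent: (i) for every $j\in[m]$ there is a non-zero constant $\alpha_j$ with $T_{g(j)}^\top F_j=\alpha_jE_s$, and $T_h^\top F_j=0$ for all $h<g(j)$; (ii) for every $j\in[m]$: $\sum_{i=1}^\ell f_{ij}t^k_{hi}=0$ for all $k\in\{0,\dots,d\}$ and all $h<g(j)$, and $\sum_{i=1}^\ell\sum_{k=0}^d f_{ij}t^k_{g(j),i}p_k(r)$ is non-zero for $r=s$ and zero for all $r\neq s$.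
   Context: $[m]=\{1,\dots,m\}$. Condition (i) is called the triangular criterion for $g$. *)

(* Defs.v *)
From HB Require Import structures.
From mathcomp Require Import all_boot all_order all_algebra.
From mathcomp Require Import algC.
Set Implicit Arguments. Unset Strict Implicit. Unset Printing Implicit Defensive.
Import Order.TTheory GRing.Theory Num.Theory.
Local Open Scope ring_scope.

(* Complex numbers are modelled by mathcomp's algebraic complex numbers algC.
   The finite set \mathcal{E} is identified with 'I_n, and the d+1 relations /
   idempotents are indexed by 'I_(d.+1). *)

Definition comm_assoc_scheme (n d : nat) (A : 'I_d.+1 -> 'M[algC]_n) : Prop :=
  A ord0 = 1%:M /\
  (forall k, A k != 0) /\
  (forall k (x y : 'I_n), A k x y = 0 \/ A k x y = 1) /\
  \sum_(k < d.+1) A k = const_mx 1 /\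
  (forall k, exists k', (A k)^T = A k') /\
  (forall i j, exists c : 'I_d.+1 -> algC,
      A i *m A j = \sum_(k < d.+1) c k *: A k) /\
  (forall i j, A i *m A j = A j *m A i).

(* E_0, ..., E_d are the primitive idempotents of the Bose-Mesner algebra
   spanned by A: nonzero, pairwise orthogonal idempotents in span(A)
   summing to the identity (d+1 of them, hence a basis). *)
Definition primitive_idempotents (n d : nat) (A E : 'I_d.+1 -> 'M[algC]_n) : Prop :=
  [/\ (forall r, E r != 0),
      (forall r r', E r *m E r' = if r == r' then E r else 0),
      \sum_(r < d.+1) E r = 1%:M &
      (forall r, exists c : 'I_d.+1 -> algC, E r = \sum_(k < d.+1) c k *: A k)].

(* Main.v *)
Require Import Defs.
From HB Require Import structures.
From mathcomp Require Import all_boot all_order all_algebra.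
From mathcomp Require Import algC.
Import Order.TTheory GRing.Theory Num.Theory.
Local Open Scope ring_scope.

Lemma indepA (n d : nat) (A : 'I_d.+1 -> 'M[algC]_n) (a : 'I_d.+1 -> algC) :
  comm_assoc_scheme A -> \sum_(k < d.+1) a k *: A k = 0 -> forall k, a k = 0.
Proof.
move=> [_ [Hnz [H01 [Hsum _]]]] Ha k.
have: ~~ [forall x, forall y, A k x y == 0].
  apply: contra (Hnz k) => /forallP H; apply/eqP/matrixP => x y.
  by rewrite mxE; exact/eqP/(forallP (H x) y).
move/forallPn => [x /forallPn [y /negPf Hxy]].
have Hk1 : A k x y = 1 by case: (H01 k x y) => // /eqP; rewrite Hxy.
have Hge : forall k', 0 <= A k' x y by move=> k'; case: (H01 k' x y) => ->.
have Hoth : forall k', k' != k -> A k' x y = 0.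
  have := congr1 (fun M : 'M[algC]_n => M x y) Hsum => /=.
  rewrite summxE mxE (bigD1 k) //= Hk1 => H0.
  have {}H0 : \sum_(i < d.+1 | i != k) A i x y = 0.
    by apply: (@addrI _ 1); rewrite H0 addr0.
  move=> k' Hk'.
  by have := psumr_eq0P (fun i _ => Hge i) H0; apply.
have := congr1 (fun M : 'M[algC]_n => M x y) Ha => /=.
rewrite summxE mxE (bigD1 k) //= mxE Hk1 mulr1 big1 ?addr0 //.
by move=> k' Hk'; rewrite mxE Hoth // mulr0.
Qed.

Theorem mainTheorem2 (c n d l m : nat)
  (T : 'I_l -> 'M[algC]_(c, n))
  (A E : 'I_d.+1 -> 'M[algC]_n) (p : 'I_d.+1 -> 'I_d.+1 -> algC)
  (t : 'I_l -> 'I_l -> 'I_d.+1 -> algC)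
  (f : 'I_l -> 'I_m -> algC) (s : 'I_d.+1) (g : 'I_m -> 'I_l) :
  comm_assoc_scheme A ->
  primitive_idempotents A E ->
  (forall k r, A k *m E r = p k r *: E r) ->
  (forall i j, (T i)^T *m T j = \sum_(k < d.+1) t i j k *: A k) ->
  let F := fun j : 'I_m => \sum_(i < l) f i j *: T i in
  (forall j : 'I_m,
     (exists alpha : algC, alpha != 0 /\ (T (g j))^T *m F j = alpha *: E s) /\
     (forall h : 'I_l, (h < g j)%N -> (T h)^T *m F j = 0))
  <->
  (forall j : 'I_m,
     (forall (k : 'I_d.+1) (h : 'I_l), (h < g j)%N ->
        \sum_(i < l) f i j * t h i k = 0) /\
     (\sum_(i < l) \sum_(k < d.+1) f i j * t (g j) i k * p k s != 0) /\
     (forall r : 'I_d.+1, r != s ->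
        \sum_(i < l) \sum_(k < d.+1) f i j * t (g j) i k * p k r = 0)).
Proof.
move=> HA [HEnz HEE HEsum _] HAE HTT F.
have HM : forall h j, (T h)^T *m F j =
    \sum_(k < d.+1) (\sum_(i < l) f i j * t h i k) *: A k.
  move=> h j; rewrite /F mulmx_sumr.
  under eq_bigr do rewrite -scalemxAr HTT scaler_sumr.
  rewrite exchange_big /=; apply: eq_bigr => k _.
  by rewrite scaler_suml; apply: eq_bigr => i _; rewrite scalerA.
have Hlam : forall h j r,
    \sum_(i < l) \sum_(k < d.+1) f i j * t h i k * p k r =
    \sum_(k < d.+1) (\sum_(i < l) f i j * t h i k) * p k r.
  move=> h j r; rewrite exchange_big /=; apply: eq_bigr => k _.
  by rewrite mulr_suml.
have HME : forall h j r, (T h)^T *m F j *m E r =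
    (\sum_(i < l) \sum_(k < d.+1) f i j * t h i k * p k r) *: E r.
  move=> h j r; rewrite HM Hlam mulmx_suml scaler_suml; apply: eq_bigr => k _.
  by rewrite -scalemxAl HAE scalerA.
have HMsum : forall h j, (T h)^T *m F j =
    \sum_(r < d.+1) (\sum_(i < l) \sum_(k < d.+1) f i j * t h i k * p k r) *: E r.
  move=> h j; rewrite -[LHS]mulmx1 -HEsum mulmx_sumr.
  by apply: eq_bigr => r _; rewrite HME.
have scal0 : forall (a : algC) r, a *: E r = 0 -> a = 0.
  move=> a r /eqP; rewrite scaler_eq0 (negPf (HEnz r)) orbF => /eqP //.
split.
- move=> H j; have [[al [Hal HT]] Hh] := H j; split; [|split].
  + move=> k h Hlt; apply: (@indepA _ _ A (fun k => \sum_(i < l) f i j * t h i k) HA _ k); rewrite -HM; exact: Hh.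
  + have := HME (g j) j s; rewrite HT -scalemxAl HEE eqxx => /eqP.
    rewrite -subr_eq0 -scalerBl => /eqP /scal0 /eqP.
    by rewrite subr_eq0 => /eqP <-.
  + move=> r Hr; have := HME (g j) j r; rewrite HT -scalemxAl HEE eq_sym (negPf Hr).
    by rewrite scaler0 => /esym /scal0.
- move=> H j; have [H1 [H2 H3]] := H j; split.
  + exists (\sum_(i < l) \sum_(k < d.+1) f i j * t (g j) i k * p k s); split => //.
    rewrite HMsum (bigD1 s) //= [X in _ + X = _]big1 ?addr0 // => r Hr.
    by rewrite H3 ?scale0r.
  + move=> h Hlt; rewrite HM big1 // => k _; by rewrite H1 ?scale0r.
Qed.
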